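(* Under the same setting, let $\hat N_A$ be the global dual basis functions defined there. Then for every function $u=\sum_{B=1}^n P_B N_B$ in the spline space spanned by $\{N_A\}$, the coefficients are recovered as $P_A=\int_\Omega \hat N_A\,u\,d\Omega$ for all $A$. Equivalently, the operator $\Pi u=\sum_A\big(\int_\Omega\hat N_A u\,d\Omega\big)N_A$, defined for $u\in L^2(\Omega)$, is a linear projection onto the spline space (it reproduces every spline).
   Context: Setting: $\Omega\subset\mathbb{R}^d$ is partitioned into elements $\Omega^e$ of positive measure; $\{N_A\}_{A=1}^n$ is a nonnegative spline basis with $\int_\Omega N_A>0$; on each element, with local-to-global index map $a\mapsto A(e,a)$ listing the basis functions not identically zero there, $\mathbf{N}^e=\mathbf{C}^e\mathbf{B}^e$ for linearly independent Bernstein functions $\mathbf{B}^e$ and invertible extraction matrix $\mathbf{C}^e$; $\mathbf{R}^e=(\mathbf{C}^e)^{-1}$; $G^e_{ij}=\int_{\Omega^e}B^e_iB^e_j$; $\omega^e_a=\int_{\Omega^e}N_{A(e,a)}/\int_\Omega N_{A(e,a)}$; $\hat{\mathbf{N}}^e=\operatorname{diag}(\boldsymbol{\omega}^e)(\mathbf{R}^e)^T(\mathbf{G}^e)^{-1}\mathbf{B}^e$; and $\hat N_A|_{\Omega^e}=\hat N^e_a$ if $A=A(e,a)$, $0$ otherwise. *)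

(* Defs.v *)
From HB Require Import structures.
From mathcomp Require Import all_boot all_order all_algebra.
Unset Printing Implicit Defensive.
Import Order.TTheory GRing.Theory Num.Theory.
Local Open Scope ring_scope.

Section SplineDual.
Variables (R : fieldType) (d m n : nat).

(* Om e x  <=>  x lies in the element Omega^e;  Omega is their union. *)
Definition inOmega (Om : 'I_m -> 'rV[R]_d -> bool) (x : 'rV[R]_d) : bool :=
  [exists e, Om e x].

(* I e f = \int_{Omega^e} f ;  the integral over Omega is the sum over elements *)
Definition intOmega (I : 'I_m -> ('rV[R]_d -> R) -> R) (f : 'rV[R]_d -> R) : R :=
  \sum_(e < m) I e f.

Variables (I : 'I_m -> ('rV[R]_d -> R) -> R) (N : 'I_n -> 'rV[R]_d -> R)
  (ne : 'I_m -> nat) (loc : forall e, 'I_(ne e) -> 'I_n)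
  (Bern : forall e, 'I_(ne e) -> 'rV[R]_d -> R) (C : forall e, 'M[R]_(ne e)).

Definition gram (e : 'I_m) : 'M[R]_(ne e) :=
  \matrix_(i < ne e, j < ne e) I e (fun x => Bern e i x * Bern e j x).

Definition omega (e : 'I_m) (a : 'I_(ne e)) : R :=
  I e (N (loc e a)) / intOmega I (N (loc e a)).

Definition dualLocal (e : 'I_m) (a : 'I_(ne e)) (x : 'rV[R]_d) : R :=
  \sum_(b < ne e)
     omega e a * (((invmx (C e))^T *m invmx (gram e)) a b) * Bern e b x.

Definition dualGlobal (Om : 'I_m -> 'rV[R]_d -> bool) (A : 'I_n)
    (x : 'rV[R]_d) : R :=
  if [pick e | Om e x] is Some e then
    if [pick a | loc e a == A] is Some a then dualLocal e a x else 0
  else 0.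

Definition projPi (Om : 'I_m -> 'rV[R]_d -> bool) (u : 'rV[R]_d -> R)
    (x : 'rV[R]_d) : R :=
  \sum_(A < n) intOmega I (fun y => dualGlobal Om A y * u y) * N A x.

End SplineDual.

(* Main.v *)
Require Import Defs.
From HB Require Import structures.
From mathcomp Require Import all_boot all_order all_algebra.
From mathcomp Require Import ring.
Import Order.TTheory GRing.Theory Num.Theory.
Local Open Scope ring_scope.
Section Lin.
Variables (R : fieldType) (T : Type) (J : (T -> R) -> R).
Hypothesis J_lin : forall (c : R) f g, J (fun x => c * f x + g x) = c * J f + J g.
Hypothesis J_ext : forall f g, (forall x, f x = g x) -> J f = J g.

Lemma J0 : J (fun _ => 0) = 0.
Proof.
have := J_lin 1 (fun _ => 0) (fun _ => 0).
rewrite (@J_ext _ (fun _ => 0)) => [|x]; last by rewrite mulr0 addr0.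
rewrite mul1r => /eqP; rewrite -subr_eq0 opprD addrA subrr sub0r oppr_eq0.
by move/eqP.
Qed.

Lemma JZ c f : J (fun x => c * f x) = c * J f.
Proof.
rewrite -[RHS]addr0 -J0 -J_lin; apply: J_ext => x; by rewrite addr0.
Qed.

Lemma Jsum (I : Type) (r : seq I) (F : I -> T -> R) :
  J (fun x => \sum_(i <- r) F i x) = \sum_(i <- r) J (F i).
Proof.
elim: r => [|a r IH].
  rewrite big_nil -[RHS]J0; apply: J_ext => x; exact: big_nil.
rewrite big_cons -IH -(mul1r (J (F a))) -J_lin.
apply: J_ext => x; by rewrite big_cons mul1r.
Qed.
End Lin.

Lemma unit_of_ker (R : fieldType) k (G : 'M[R]_k) :
  (forall v : 'rV[R]_k, v *m G = 0 -> v = 0) -> G \in unitmx.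
Proof.
move=> H; rewrite -row_free_unit -kermx_eq0; apply/eqP/row_matrixP => i.
rewrite row0; apply: H; rewrite -row_mul.
have /sub_kermxP -> : (kermx G <= kermx G)%MS by exact: submx_refl.
by rewrite row0.
Qed.

Theorem mainTheorem2
  (R : realFieldType) (d m n : nat)
  (* partition of Omega into elements *)
  (Om : 'I_m -> 'rV[R]_d -> bool)
  (Om_disj : forall e1 e2 x, Om e1 x -> Om e2 x -> e1 = e2)
  (* integration over each element: linear, local, positive, positive measure *)
  (I : 'I_m -> ('rV[R]_d -> R) -> R)
  (I_lin : forall e (c : R) f g, I e (fun x => c * f x + g x) = c * I e f + I e g)
  (I_loc : forall e f g, (forall x, Om e x -> f x = g x) -> I e f = I e g)
  (I_pos : forall e f, (forall x, Om e x -> 0 <= f x) -> 0 <= I e f)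
  (I_meas : forall e, 0 < I e (fun _ => 1))
  (* nonnegative spline basis with positive integrals *)
  (N : 'I_n -> 'rV[R]_d -> R)
  (N_nonneg : forall A x, inOmega R d m Om x -> 0 <= N A x)
  (N_int : forall A, 0 < intOmega R d m I (N A))
  (* local-to-global index maps *)
  (ne : 'I_m -> nat) (loc : forall e, 'I_(ne e) -> 'I_n)
  (loc_inj : forall e, injective (loc e))
  (loc_supp : forall e B,
      (exists a, loc e a = B) <-> (exists x, Om e x /\ N B x <> 0))
  (* linearly independent (in L^2(Omega^e)) Bernstein functions *)
  (Bern : forall e, 'I_(ne e) -> 'rV[R]_d -> R)
  (Bern_indep : forall e (c : 'I_(ne e) -> R),
      I e (fun x => (\sum_(i < ne e) c i * Bern e i x) ^+ 2) = 0 ->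
      forall i, c i = 0)
  (* invertible extraction matrices: N^e = C^e B^e on Omega^e *)
  (C : forall e, 'M[R]_(ne e))
  (C_inv : forall e, C e \in unitmx)
  (C_ext : forall e a x, Om e x ->
      N (loc e a) x = \sum_(b < ne e) C e a b * Bern e b x) :
  forall P : 'I_n -> R,
    let u := fun x => \sum_(B < n) P B * N B x in
    (forall A : 'I_n,
        P A = intOmega R d m I (fun x => dualGlobal R d m n I N ne loc Bern C Om A x * u x))
    /\ (forall x, inOmega R d m Om x -> projPi R d m n I N ne loc Bern C Om u x = u x).
Proof.
move=> P u.
have Iext : forall e f g, (forall x, f x = g x) -> I e f = I e g.
  by move=> e f g H; apply: I_loc => x _; exact: H.
have JS := fun e => Jsum _ _ _ (I_lin e) (Iext e).
have JZe := fun e => JZ _ _ _ (I_lin e) (Iext e).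
have J0e := fun e => J0 _ _ _ (I_lin e) (Iext e).
have u_loc : forall e x, Om e x ->
    u x = \sum_(a < ne e) P (loc e a) * N (loc e a) x.
  move=> e x Hx; rewrite /u (partition_big (loc e) predT) //=.
  apply: eq_bigr => B _.
  case: (pickP (fun a => loc e a == B)) => [a0 /eqP Ha0 | Hn].
    rewrite (big_pred1 a0) ?Ha0 // => a /=.
    by rewrite -Ha0 (inj_eq (loc_inj e)).
  rewrite big_pred0; last by move=> a /=; rewrite Hn.
  case: (N B x =P 0) => [-> | NB]; first by rewrite mulr0.
  have [a Ha] : exists a, loc e a = B by apply/loc_supp; exists x.
  by move: (Hn a) => /=; rewrite Ha eqxx.
have Gunit : forall e, gram R d m I ne Bern e \in unitmx.
  move=> e; apply: unit_of_ker => v Hv.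
  have H0 : I e (fun x => (\sum_(i < ne e) v 0 i * Bern e i x) ^+ 2) = 0.
    transitivity (I e (fun x => \sum_(i < ne e) \sum_(j < ne e)
                   (v 0 i * v 0 j) * (Bern e i x * Bern e j x))).
      apply: Iext => x; rewrite expr2 mulr_suml; apply: eq_bigr => i _.
      rewrite mulr_sumr; apply: eq_bigr => j _; ring.
    rewrite JS; under eq_bigr => i _ do rewrite JS.
    under eq_bigr => i _ do under eq_bigr => j _ do rewrite JZe.
    rewrite exchange_big /=; apply: big1 => j _.
    have := congr1 (fun M : 'rV_(ne e) => M 0 j) Hv; rewrite !mxE => Hj.
    transitivity (v 0 j * \sum_i v 0 i * gram R d m I ne Bern e i j); last by rewrite Hj mulr0.
    rewrite mulr_sumr; apply: eq_bigr => i _; rewrite mxE; ring.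
  apply/rowP => i; rewrite mxE; exact: (Bern_indep e (fun i => v 0 i) H0 i).
have core : forall e a,
    I e (fun x => dualLocal R d m n I N ne loc Bern C e a x * u x)
    = omega R d m n I N ne loc e a * P (loc e a).
  move=> e a.
  set M := (invmx (C e))^T *m invmx (gram R d m I ne Bern e).
  set w := omega R d m n I N ne loc e a.
  transitivity (I e (fun x => \sum_(b < ne e) \sum_(a' < ne e) \sum_(c < ne e)
      (w * M a b * (P (loc e a') * C e a' c)) * (Bern e b x * Bern e c x))).
    apply: I_loc => x Hx; rewrite (u_loc e x Hx) /dualLocal -/M -/w.
    rewrite mulr_suml; apply: eq_bigr => b _; rewrite mulr_sumr.
    apply: eq_bigr => a' _; rewrite (C_ext e a' x Hx) !mulr_sumr.
    apply: eq_bigr => c _; ring.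
  rewrite JS; under eq_bigr => b _ do rewrite JS.
  under eq_bigr => b _ do under eq_bigr => a' _ do rewrite JS.
  under eq_bigr => b _ do under eq_bigr => a' _ do under eq_bigr => c _ do rewrite JZe.
  have MGC : M *m gram R d m I ne Bern e *m (C e)^T = 1%:M.
    by rewrite /M -(mulmxA (invmx (C e))^T) mulVmx ?Gunit // mulmx1 -trmx_mul mulmxV ?C_inv // trmx1.
  transitivity (w * \sum_(a' < ne e) P (loc e a') * (M *m gram R d m I ne Bern e *m (C e)^T) a a').
    rewrite exchange_big mulr_sumr; apply: eq_bigr => a' _.
    rewrite !mxE exchange_big !mulr_sumr; apply: eq_bigr => c _.
    rewrite !mxE mulr_suml !mulr_sumr; apply: eq_bigr => b _; rewrite !mxE; ring.
  rewrite MGC (bigD1 a) //= big1 ?addr0 => [|a' Ha']; rewrite mxE.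
    by rewrite eqxx mulr1n mulr1.
  by rewrite eq_sym (negbTE Ha') mulr0n mulr0.
have termE : forall e A,
    I e (fun x => dualGlobal R d m n I N ne loc Bern C Om A x * u x)
    = I e (N A) / intOmega R d m I (N A) * P A.
  move=> e A.
  transitivity (I e (fun x =>
     (if [pick a | loc e a == A] is Some a
      then dualLocal R d m n I N ne loc Bern C e a x else 0) * u x)).
    apply: I_loc => x Hx; rewrite /dualGlobal.
    case: pickP => [e' He'|Hn]; last by rewrite Hn in Hx.
    by rewrite (Om_disj _ _ _ He' Hx).
  case: pickP => [a /eqP Ha | Hn].
    by rewrite core /omega Ha.
  have -> : I e (N A) = 0.
    rewrite -(J0e e); apply: I_loc => x Hx.
    case: (N A x =P 0) => // NA.
    have [a Ha] : exists a, loc e a = A by apply/loc_supp; exists x.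
    by move: (Hn a) => /=; rewrite Ha eqxx.
  rewrite mul0r mul0r -[RHS](J0e e); apply: Iext => x; exact: mul0r.
have part1 : forall A, P A =
    intOmega R d m I (fun x => dualGlobal R d m n I N ne loc Bern C Om A x * u x).
  move=> A; rewrite /intOmega.
  under eq_bigr => e _ do rewrite termE.
  rewrite -mulr_suml -mulr_suml divff ?mul1r //.
  by have := N_int A; rewrite /intOmega lt0r => /andP[].
split => // x _; rewrite /projPi; apply: eq_bigr => A _; by rewrite -part1.
Qed.
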